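(* Let $G$ be a torsion-free group and $G'\le G$ a subgroup of finite index. Suppose $G$ acts on a simplicial tree $T$ and the induced action of $G'$ on $T$ is $\kappa$-acylindrical. Then the action of $G$ on $T$ is $\kappa$-acylindrical.
   Context: For a non-negative integer $\kappa$, an action of a group on a simplicial tree is $\kappa$-acylindrical if the pointwise stabiliser of every edge path of length at least $\kappa+1$ (number of edges) is trivial. *)

(* Defs.v *)
From HB Require Import structures.
From mathcomp Require Import all_boot monoid.
Set Implicit Arguments. Unset Strict Implicit. Unset Printing Implicit Defensive.

Local Open Scope group_scope.

Definition torsion_free (G : groupType) : Prop :=
  forall (g : G) (n : nat), (0 < n)%N -> g ^+ n = 1 -> g = 1.

Definition is_subgroup (G : groupType) (H : G -> Prop) : Prop :=
  [/\ H 1, (forall x y, H x -> H y -> H (x * y)) & (forall x, H x -> H x^-1)].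

Definition finite_index (G : groupType) (H : G -> Prop) : Prop :=
  exists s : seq G, forall g : G, exists2 r, r \in s & H (r^-1 * g).

Fixpoint is_walk (V : Type) (adj : V -> V -> Prop) (s : seq V) : Prop :=
  match s with
  | a :: ((b :: _) as t) => adj a b /\ is_walk adj t
  | _ => True
  end.

Fixpoint reduced (V : Type) (s : seq V) : Prop :=
  match s with
  | a :: ((_ :: c :: _) as t) => a <> c /\ reduced t
  | _ => True
  end.

Definition is_tree (V : Type) (adj : V -> V -> Prop) : Prop :=
  [/\ (forall x y, adj x y -> adj y x),
      (forall x, ~ adj x x),
      (forall x y, exists s : seq V, is_walk adj (x :: s) /\ last x s = y) &
      (forall x (s : seq V), is_walk adj (x :: s) -> reduced (x :: s) ->
          s <> [::] -> last x s <> x)].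

(* An edge path of length n (n edges) in the tree: a reduced walk
   v0 :: s with size s = n (n+1 vertices). *)
Definition edge_path (V : Type) (adj : V -> V -> Prop) (v0 : V) (s : seq V)
  : Prop := is_walk adj (v0 :: s) /\ reduced (v0 :: s).

Definition tree_action (G : groupType) (V : Type) (adj : V -> V -> Prop)
  (act : G -> V -> V) : Prop :=
  [/\ (forall v, act 1 v = v),
      (forall g h v, act (g * h) v = act g (act h v)) &
      (forall g u v, adj u v -> adj (act g u) (act g v))].

Fixpoint fixes_all (G : groupType) (V : Type) (act : G -> V -> V) (g : G)
  (s : seq V) : Prop :=
  match s with
  | [::] => True
  | v :: t => act g v = v /\ fixes_all act g t
  end.

Definition acylindrical_on (G : groupType) (H : G -> Prop) (V : Type)
  (adj : V -> V -> Prop) (act : G -> V -> V) (kappa : nat) : Prop :=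
  forall (v0 : V) (s : seq V), edge_path adj v0 s -> (kappa.+1 <= size s)%N ->
    forall g : G, H g -> fixes_all act g (v0 :: s) -> g = 1.

Definition acylindrical (G : groupType) (V : Type) (adj : V -> V -> Prop)
  (act : G -> V -> V) (kappa : nat) : Prop :=
  acylindrical_on (fun _ : G => True) adj act kappa.

(* Main.v *)
Require Import Defs.
From HB Require Import structures.
From mathcomp Require Import all_boot monoid.
From Stdlib Require Import ClassicalEpsilon.

Local Open Scope group_scope.

Lemma fixes_pow (G : groupType) (V : Type) (act : G -> V -> V) g s n :
  (forall v, act 1 v = v) -> (forall g h v, act (g * h) v = act g (act h v)) ->
  fixes_all act g s -> fixes_all act (g ^+ n) s.
Proof.
move=> a1 aM; elim: s => [//|v s IH] /= [Hv Hs]; split; last exact: IH.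
elim: n {IH} => [|n IHn]; first by rewrite expg0 a1.
by rewrite expgS aM IHn.
Qed.

Theorem lemma2p5 (G : groupType) (G' : G -> Prop) (V : Type)
  (adj : V -> V -> Prop) (act : G -> V -> V) (kappa : nat) :
  torsion_free G ->
  is_subgroup G' -> finite_index G' ->
  is_tree adj -> tree_action adj act ->
  acylindrical_on G' adj act kappa ->
  acylindrical adj act kappa.
Proof.
move=> tf [H1 HM HV] [s Hs] _ [a1 aM _] acy v0 p Hp Hsz g _ Hfix.
have f : forall k : nat, {r | r \in s /\ G' (r^-1 * g ^+ k)}.
  move=> k; apply: constructive_indefinite_description.
  by have [r rs Hr] := Hs (g ^+ k); exists r.
pose L := map (fun k => proj1_sig (f k)) (iota 0 (size s).+1).
have nU : ~~ uniq L.
  apply/negP => U.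
  have : (size L <= size s)%N.
    apply: uniq_leq_size => // x /mapP [k _ ->].
    by case: (proj2_sig (f k)).
  by rewrite size_map size_iota ltnn.
have [i [j [ij jL E]]] := uniqPn 1 nU.
rewrite size_map size_iota in jL.
have iL := ltn_trans ij jL.
rewrite !(nth_map 0%N) ?size_iota ?nth_iota // in E.
rewrite !add0n in E.
have [_ Hi] := proj2_sig (f i); have [_ Hj] := proj2_sig (f j).
rewrite -E in Hj; move: Hi Hj; set ri := proj1_sig (f i) => Hi Hj.
have Hij : G' (g ^+ (j - i)).
  have -> : g ^+ (j - i) = (ri^-1 * g ^+ i)^-1 * (ri^-1 * g ^+ j).
    rewrite invgM invgK -mulgA (mulgA ri) mulgV mul1g.
    by rewrite -{2}(subnKC (ltnW ij)) expgnDr mulgA mulVg mul1g.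
  by apply: HM => //; apply: HV.
have e1 : g ^+ (j - i) = 1.
  apply: (acy v0 p Hp Hsz) => //.
  exact: fixes_pow.
by apply: (tf g (j - i)) => //; rewrite subn_gt0.
Qed.
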